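(* Let $f:\{0,1\}^n\to\{0,1\}$ be a total Boolean function and $g=1-2f:\{0,1\}^n\to\{-1,1\}$. Let $R=H\,\mathrm{diag}(g)\,H$. Then $\lambda(f)=\max_{v\in\mathbb{R}^{2^n}:\|v\|=1} v^{\mathsf T}(RXR-X)v$.
   Context: $H$ is the $2^n\times2^n$ matrix indexed by $\{0,1\}^n$ with $H_{xy}=(-1)^{\langle x,y\rangle}2^{-n/2}$. $\mathrm{diag}(g)$ is the diagonal matrix with $\mathrm{diag}(g)_{xx}=g(x)$, and $X$ is the diagonal matrix with $X_{xx}=|x|$, the Hamming weight of $x$. The sensitivity graph $G_f$ has vertex set $\{0,1\}^n$ and an edge between $x,y$ iff they differ in exactly one coordinate and $f(x)\ne f(y)$; $A_f$ is its adjacency matrix and $\lambda(f)=\|A_f\|$. *)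

(* Defs.v *)
From HB Require Import structures.
From mathcomp Require Import all_boot all_order all_algebra.
From mathcomp Require Import classical_sets reals.
Set Implicit Arguments. Unset Strict Implicit. Unset Printing Implicit Defensive.
Import Order.TTheory GRing.Theory Num.Theory.
Local Open Scope ring_scope.

(* The cube {0,1}^n is encoded as 'I_(2^n): x encodes the bit string
   (bit x 0, ..., bit x (n-1)) (binary expansion). *)
Definition bit (n : nat) (x : 'I_(2 ^ n)) (i : 'I_n) : bool := odd (x %/ 2 ^ i).

(* <x,y> = sum_i x_i y_i (as a natural number; only its parity matters) *)
Definition dotb (n : nat) (x y : 'I_(2 ^ n)) : nat :=
  (\sum_(i < n) (bit x i && bit y i))%N.

Definition hweight (n : nat) (x : 'I_(2 ^ n)) : nat := (\sum_(i < n) bit x i)%N.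

Definition hdist (n : nat) (x y : 'I_(2 ^ n)) : nat :=
  (\sum_(i < n) (bit x i != bit y i))%N.

Section Mats.
Variables (R : realType) (n : nat).

Definition hadamard : 'M[R]_(2 ^ n) :=
  \matrix_(x, y) ((-1) ^+ dotb x y / Num.sqrt (2 ^+ n)).

Definition diagf (g : 'I_(2 ^ n) -> R) : 'M[R]_(2 ^ n) :=
  \matrix_(x, y) (if x == y then g x else 0).

Definition weightmx : 'M[R]_(2 ^ n) := diagf (fun x => (hweight x)%:R).

Definition sens_adj (f : 'I_(2 ^ n) -> bool) : 'M[R]_(2 ^ n) :=
  \matrix_(x, y) (if (hdist x y == 1)%N && (f x != f y) then 1 else 0).

Definition vnorm (v : 'cV[R]_(2 ^ n)) : R := Num.sqrt (\sum_i v i 0 ^+ 2).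

Definition opnorm (A : 'M[R]_(2 ^ n)) : R :=
  sup [set vnorm (A *m v) | v in [set v | vnorm v = 1]].

Definition qform (M : 'M[R]_(2 ^ n)) (v : 'cV[R]_(2 ^ n)) : R :=
  (v^T *m M *m v) 0 0.

Definition lambdaf (f : 'I_(2 ^ n) -> bool) : R := opnorm (sens_adj f).

Definition gsign (f : 'I_(2 ^ n) -> bool) (x : 'I_(2 ^ n)) : R := 1 - 2 * (f x)%:R.

Definition Rmx (f : 'I_(2 ^ n) -> bool) : 'M[R]_(2 ^ n) :=
  hadamard *m diagf (gsign f) *m hadamard.

End Mats.

(* Main.v *)
From HB Require Import structures.
From mathcomp Require Import all_boot all_order all_algebra.
From mathcomp Require Import classical_sets reals.
From mathcomp Require Import ring lra.
Require Import Defs.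
Set Implicit Arguments. Unset Strict Implicit. Unset Printing Implicit Defensive.
Import Order.TTheory GRing.Theory Num.Theory.
Local Open Scope ring_scope.

Section LA.
Variable R : realType.
Variable m : nat.
Implicit Types (P M : 'M[R]_m) (x y u v : 'cV[R]_m).

Lemma quad_disc (a b c : R) : 0 <= c ->
  (forall t : R, 0 <= a + 2 * b * t + c * t ^+ 2) -> b ^+ 2 <= a * c.
Proof.
move=> hc0 H.
have [c0|cn0] := eqVneq c 0.
  have [b0|bn0] := eqVneq b 0; first by rewrite b0 c0 expr0n mulr0.
  have := H (- (a + 1) / (2 * b)); rewrite c0 mul0r addr0.
  have -> : 2 * b * (- (a + 1) / (2 * b)) = - (a + 1) by field; rewrite bn0.
  lra.
have hc : 0 < c by rewrite lt_def cn0.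
have := H (- b / c).
have -> : a + 2 * b * (- b / c) + c * (- b / c) ^+ 2 = (a * c - b ^+ 2) / c.
  by field.
by rewrite pmulr_lge0 ?invr_gt0 // subr_ge0.
Qed.


Definition bil P x y := (x^T *m P *m y) 0 0.

Lemma bilC P x y : P^T = P -> bil P y x = bil P x y.
Proof.
move=> sP; rewrite /bil.
have e : (y^T *m P *m x)^T = x^T *m P *m y by rewrite !trmx_mul trmxK sP mulmxA.
by rewrite -e [RHS]mxE.
Qed.

Lemma bilDr P x y z : bil P x (y + z) = bil P x y + bil P x z.
Proof. by rewrite /bil mulmxDr mxE. Qed.
Lemma bilDl P x y z : bil P (y + z) x = bil P y x + bil P z x.
Proof. by rewrite /bil raddfD /= !mulmxDl mxE. Qed.
Lemma bilZr P x y (t : R) : bil P x (t *: y) = t * bil P x y.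
Proof. by rewrite /bil -scalemxAr mxE. Qed.
Lemma bilZl P x y (t : R) : bil P (t *: y) x = t * bil P y x.
Proof. by rewrite /bil linearZ /= -!scalemxAl mxE. Qed.

Lemma bil_CS P x y : P^T = P -> (forall z, 0 <= bil P z z) ->
  bil P x y ^+ 2 <= bil P x x * bil P y y.
Proof.
move=> sP psd; apply: quad_disc; first exact: psd.
move=> t; have := psd (x + t *: y).
rewrite !bilDl !bilDr !bilZl !bilZr (bilC y x sP).
by move=> h; apply: le_trans h _; rewrite le_eqVlt; apply/orP; left; apply/eqP; ring.
Qed.


Definition nsq v := bil 1%:M v v.
Definition vn v := Num.sqrt (\sum_i v i 0 ^+ 2).
Definition frob M := \sum_i \sum_j M i j ^+ 2.

Lemma bil1 x y : bil 1%:M x y = \sum_i x i 0 * y i 0.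
Proof. by rewrite /bil mulmx1 mxE; apply: eq_bigr => i _; rewrite mxE. Qed.

Lemma nsqE v : nsq v = \sum_i v i 0 ^+ 2.
Proof. by rewrite /nsq bil1; apply: eq_bigr => i _; rewrite expr2. Qed.

Lemma nsq_ge0 v : 0 <= nsq v.
Proof. by rewrite nsqE; apply: sumr_ge0 => i _; exact: sqr_ge0. Qed.

Lemma vnE v : vn v = Num.sqrt (nsq v).
Proof. by rewrite nsqE. Qed.

Lemma bilE M x y : bil M x y = bil 1%:M x (M *m y).
Proof. by rewrite /bil mulmx1 mulmxA. Qed.

Lemma bil_sq A v : A^T = A -> bil (A *m A) v v = nsq (A *m v).
Proof.
by move=> sA; rewrite /nsq /bil mulmx1 trmx_mul sA !mulmxA.
Qed.

Lemma CS1 x y : bil 1%:M x y ^+ 2 <= nsq x * nsq y.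
Proof. by apply: bil_CS; [rewrite trmx1 | move=> z; exact: nsq_ge0]. Qed.

Lemma frob_bound M v : nsq (M *m v) <= frob M * nsq v.
Proof.
rewrite nsqE /frob mulr_suml; apply: ler_sum => i _.
pose r : 'cV[R]_m := \col_j M i j.
have -> : (M *m v) i 0 = bil 1%:M r v.
  by rewrite bil1 mxE; apply: eq_bigr => j _; rewrite mxE.
have -> : \sum_j M i j ^+ 2 = nsq r by rewrite nsqE; apply: eq_bigr => j _; rewrite mxE.
exact: CS1.
Qed.

Lemma frob_ge0 M : 0 <= frob M.
Proof. by apply: sumr_ge0 => i _; apply: sumr_ge0 => j _; exact: sqr_ge0. Qed.

Lemma nsqZ (t : R) v : nsq (t *: v) = t ^+ 2 * nsq v.
Proof. by rewrite /nsq bilZl bilZr mulrA expr2. Qed.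

Lemma nsq_eq0 v : nsq v = 0 -> v = 0.
Proof.
rewrite nsqE => /eqP; rewrite psumr_eq0 => [/allP H|i _]; last exact: sqr_ge0.
apply/matrixP => i j; rewrite (ord1 j) mxE.
by have := H i (mem_index_enum i); rewrite sqrf_eq0 => /eqP.
Qed.

Lemma ker_nonunit M : M \notin unitmx -> exists2 u : 'cV[R]_m, u != 0 & M *m u = 0.
Proof.
move=> Mu.
have : kermx M^T != 0 by rewrite kermx_eq0 row_free_unit unitmx_tr.
move=> /eqP K0.
have [i Ki|H] := pickP (fun i => row i (kermx M^T) != 0); last first.
  by case: K0; apply/row_matrixP => i; rewrite row0; apply/eqP; have := H i => /negbFE.
exists (row i (kermx M^T))^T; first by rewrite trmx_eq0.
apply: trmx_inj; rewrite trmx_mul trmxK -row_mul mulmx_ker row0 trmx0 //.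
Qed.

Lemma vn_ge0 v : 0 <= vn v.
Proof. exact: sqrtr_ge0. Qed.

Lemma vn1 v : vn v = 1 -> nsq v = 1.
Proof. by move=> h; rewrite -(sqr_sqrtr (nsq_ge0 v)) -vnE h expr1n. Qed.

Lemma nsq1 v : nsq v = 1 -> vn v = 1.
Proof. by rewrite vnE => ->; rewrite sqrtr1. Qed.

Local Open Scope classical_set_scope.

Definition SA M := [set vn (M *m v) | v in [set v | vn v = 1]].

Lemma sq_le_vn M v : vn (M *m v) ^+ 2 = nsq (M *m v).
Proof. by rewrite vnE sqr_sqrtr ?nsq_ge0. Qed.

Lemma SA_ub M : has_ubound (SA M).
Proof.
exists (Num.sqrt (frob M)) => _ [v /= v1 <-].
rewrite vnE; apply: ler_wsqrtr.
by have := frob_bound M v; rewrite (vn1 v1) mulr1.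
Qed.

Hypothesis m_gt0 : (0 < m)%N.

Definition e0 : 'cV[R]_m := \col_i (i == Ordinal m_gt0)%:R.

Lemma e0_1 : vn e0 = 1.
Proof.
apply: nsq1; rewrite nsqE (bigD1 (Ordinal m_gt0)) //= big1 ?mxE ?eqxx ?addr0 ?expr1n //.
by move=> i ni; rewrite mxE (negbTE ni) expr0n.
Qed.

Lemma SA_n0 M : SA M !=set0.
Proof. by exists (vn (M *m e0)); exists e0 => //; exact: e0_1. Qed.

Lemma SA_sup_ge0 M : 0 <= sup (SA M).
Proof.
apply: le_trans (vn_ge0 (M *m e0)) _.
by apply: ub_le_sup; [exact: SA_ub | exists e0 => //; exact: e0_1].
Qed.

Lemma SA_le M v : nsq (M *m v) <= sup (SA M) ^+ 2 * nsq v.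
Proof.
set s := sup (SA M).
have s0 := SA_sup_ge0 M.
have [v0|vn0] := eqVneq (nsq v) 0.
  have := frob_bound M v; rewrite v0 mulr0 => h.
  by rewrite mulr0; exact: h.
have vp : 0 < nsq v by rewrite lt_def vn0 nsq_ge0.
set r := Num.sqrt (nsq v).
have rp : 0 < r by rewrite sqrtr_gt0.
have r2 : r ^+ 2 = nsq v by rewrite sqr_sqrtr // ltW.
pose w := r^-1 *: v.
have w1 : vn w = 1 by apply: nsq1; rewrite nsqZ exprVn r2 mulVf.
have : vn (M *m w) <= s by apply: ub_le_sup; [exact: SA_ub | exists w].
move=> h.
have h2 : vn (M *m w) ^+ 2 <= s ^+ 2.
  by apply: lerXn2r; rewrite ?nnegrE ?vn_ge0.
rewrite sq_le_vn /w -scalemxAr nsqZ exprVn r2 in h2.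
have ip : 0 < (nsq v)^-1 by rewrite invr_gt0.
by rewrite -(ler_pM2l ip) mulrA [_ * s ^+ 2]mulrC -mulrA mulVf ?mulr1.
Qed.

Lemma quad_le_sup M v : vn v = 1 -> bil M v v <= sup (SA M).
Proof.
move=> v1; rewrite bilE.
have h := CS1 v (M *m v); rewrite vn1 // mul1r in h.
have : `|bil 1%:M v (M *m v)| <= vn (M *m v).
  by rewrite vnE -sqrtr_sqr; apply: ler_wsqrtr.
move=> h2; apply: le_trans (ler_norm _) _; apply: le_trans h2 _.
by apply: ub_le_sup; [exact: SA_ub | exists v].
Qed.

Lemma bilBm M N x y : bil (M - N) x y = bil M x y - bil N x y.
Proof. by rewrite /bil mulmxBr mulmxBl !mxE. Qed.
Lemma bilZm (c : R) M x y : bil (c *: M) x y = c * bil M x y.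
Proof. by rewrite /bil -scalemxAr -scalemxAl mxE. Qed.

Lemma P_nonunit A : A^T = A ->
  (sup (SA A) ^+ 2 *: 1%:M - A *m A) \notin unitmx.
Proof.
move=> sA; set s := sup (SA A); set P := _ - _.
have s0 : 0 <= s := SA_sup_ge0 A.
have PT : P^T = P by rewrite /P linearB /= linearZ /= trmx1 trmx_mul sA.
have qP v : bil P v v = s ^+ 2 * nsq v - nsq (A *m v).
  by rewrite /P bilBm bilZm -bil_sq.
have psd v : 0 <= bil P v v by rewrite qP subr_ge0; exact: SA_le.
apply/negP => Pu.
pose K := frob (invmx P).
have key v : vn v = 1 -> 1 <= bil P v v * Num.sqrt K.
  move=> v1; pose y := invmx P *m v.
  have Py : P *m y = v by rewrite /y mulmxA mulmxV // mul1mx.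
  have h := bil_CS v y PT psd.
  have e1 : bil P v y = 1 by rewrite bilE Py -/(nsq v) vn1.
  have e2 : bil P y y = bil 1%:M v y by rewrite bilE Py -(bilC _ _ (trmx1 _ _)).
  rewrite e1 expr1n e2 in h; apply: le_trans h _.
  apply: ler_wpM2l; first exact: psd.
  apply: le_trans (ler_norm _) _; rewrite -sqrtr_sqr; apply: ler_wsqrtr.
  apply: le_trans (CS1 v y) _; rewrite (vn1 v1) mul1r.
  by have := frob_bound (invmx P) v; rewrite (vn1 v1) mulr1.
set c := Num.sqrt K in key *.
have c0 : 0 <= c by exact: sqrtr_ge0.
have cp : 0 < c.
  rewrite lt_def c0 andbT; apply/eqP => c00.
  by have := key e0 e0_1; rewrite c00 mulr0 ler10.
have ub v : vn v = 1 -> nsq (A *m v) <= s ^+ 2 - c^-1.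
  move=> v1; have := key v v1; rewrite qP (vn1 v1) mulr1 => h.
  have : c^-1 <= s ^+ 2 - nsq (A *m v).
    by rewrite -(ler_pM2r cp) mulVf // gt_eqF.
  lra.
have a0 := nsq_ge0 (A *m e0).
have hub := ub e0 e0_1.
have : s <= Num.sqrt (s ^+ 2 - c^-1).
  apply: ge_sup; first exact: SA_n0.
  move=> _ [v /= v1 <-]; rewrite vnE; apply: ler_wsqrtr; exact: ub.
have ci : 0 < c^-1 by rewrite invr_gt0.
have t2 : Num.sqrt (s ^+ 2 - c^-1) ^+ 2 = s ^+ 2 - c^-1 by rewrite sqr_sqrtr // subr_ge0; lra.
have t0 := sqrtr_ge0 (s ^+ 2 - c^-1).
move: t2 t0; set t := Num.sqrt _ => t2 t0 st.
have : s ^+ 2 <= t ^+ 2 by apply: lerXn2r; rewrite ?nnegrE.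
lra.
Qed.

Lemma normalize u : u != 0 -> exists2 w : 'cV[R]_m, vn w = 1 & exists c : R, w = c *: u.
Proof.
move=> un0.
have n0 : nsq u != 0 by apply: contra un0 => /eqP /nsq_eq0 ->.
have np : 0 < nsq u by rewrite lt_def n0 nsq_ge0.
set r := Num.sqrt (nsq u).
have rp : 0 < r by rewrite sqrtr_gt0.
have r2 : r ^+ 2 = nsq u by rewrite sqr_sqrtr // ltW.
exists (r^-1 *: u); last by exists r^-1.
by apply: nsq1; rewrite nsqZ exprVn r2 mulVf.
Qed.

Lemma eig_exists A : A^T = A -> exists2 u : 'cV[R]_m, vn u = 1 &
  (A *m u = sup (SA A) *: u \/ A *m u = - sup (SA A) *: u).
Proof.
move=> sA; set s := sup (SA A).
have hP := P_nonunit sA; rewrite -/s in hP.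
have fac : s ^+ 2 *: 1%:M - A *m A = (s *: 1%:M - A) *m (s *: 1%:M + A).
  rewrite mulmxDr !mulmxBl -!scalemxAl -!scalemxAr !mul1mx !mulmx1 scalerA -expr2.
  by rewrite addrA subrK.
have [U|nU] := boolP ((s *: 1%:M - A) \in unitmx).
  rewrite fac unitmx_mul U /= in hP.
  have [u un0 hu] := ker_nonunit hP.
  have [w w1 [c wE]] := normalize un0.
  exists w => //; rewrite wE; right.
  rewrite -scalemxAr scalerA mulrC -scalerA; congr (_ *: _).
  move: hu; rewrite mulmxDl -scalemxAl mul1mx => /eqP; rewrite addr_eq0 => /eqP h.
  by rewrite scaleNr h opprK.
have [u un0 hu] := ker_nonunit nU.
have [w w1 [c wE]] := normalize un0.
exists w => //; rewrite wE; left.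
rewrite -scalemxAr scalerA mulrC -scalerA; congr (_ *: _).
move: hu; rewrite mulmxBl -scalemxAl mul1mx => /eqP; rewrite subr_eq0 => /eqP <-.
by [].
Qed.
End LA.
Arguments SA {R m}. Arguments nsq {R m}. Arguments vn {R m}. Arguments bil {R m}.
Lemma binexp n x : (x < 2 ^ n)%N -> x = (\sum_(i < n) odd (x %/ 2 ^ i) * 2 ^ i)%N.
Proof.
elim: n x => [|n IH] x hx; first by rewrite big_ord0; move: hx; rewrite expn0; case: x.
rewrite big_ord_recl /= expn0 divn1 muln1.
have hx2 : (x %/ 2 < 2 ^ n)%N by rewrite ltn_divLR // -expnSr.
rewrite {1}[x](esym (odd_double_half x)); congr (_ + _)%N.
rewrite -divn2 [X in X.*2](IH _ hx2) -mul2n big_distrr /=; apply: eq_bigr => i _.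
by rewrite /bump /= add1n expnS divnMA divn2 mulnCA.
Qed.

Definition fb n (x : 'I_(2 ^ n)) : {ffun 'I_n -> bool} := [ffun i => bit x i].

Lemma fb_inj n : injective (@fb n).
Proof.
move=> x y /ffunP h; apply: val_inj.
rewrite /= (binexp (ltn_ord x)) (binexp (ltn_ord y)); apply: eq_bigr => i _.
by have := h i; rewrite !ffunE /bit => ->.
Qed.

Lemma fb_bij n : bijective (@fb n).
Proof.
apply: inj_card_bij; first exact: fb_inj.
by rewrite card_ffun card_bool !card_ord.
Qed.

Lemma sum_fb (R : realType) n (F : {ffun 'I_n -> bool} -> R) :
  \sum_(z : 'I_(2 ^ n)) F (fb z) = \sum_b F b.
Proof. by rewrite (reindex (@fb n)) //; apply: onW_bij; exact: fb_bij. Qed.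

Section Had.
Variable R : realType.
Variable n : nat.
Local Notation N := (2 ^ n)%N.

Definition phi (a : 'I_n -> bool) (i : 'I_n) (c : bool) : R := (-1) ^+ (a i && c).

Lemma sign_prod (x y z : 'I_N) :
  (-1) ^+ dotb x z * (-1) ^+ dotb z y =
  \prod_i phi (fun i => bit x i != bit y i) i (fb z i) :> R.
Proof.
rewrite /dotb -!prodrXr -big_split /=; apply: eq_bigr => i _.
rewrite /phi ffunE.
by case: (bit x i); case: (bit y i); case: (bit z i); rewrite /= ?expr0 ?expr1 ?mulr1 ?mul1r ?mulrNN ?mulr1.
Qed.

Lemma S0 (a : 'I_n -> bool) :
  \sum_(b : {ffun 'I_n -> bool}) \prod_i phi a i (b i) = \prod_i ((-1) ^+ a i + 1).
Proof.
rewrite -bigA_distr_bigA /=; apply: eq_bigr => i _.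
by rewrite big_bool /phi andbT andbF.
Qed.

Lemma S1 (a : 'I_n -> bool) :
  \sum_(b : {ffun 'I_n -> bool}) (\prod_i phi a i (b i)) * (\sum_j (b j : nat))%:R =
  \sum_j ((-1) ^+ a j * \prod_(i | i != j) ((-1) ^+ a i + 1)).
Proof.
under eq_bigr do rewrite natr_sum mulr_sumr.
rewrite exchange_big /=; apply: eq_bigr => j _.
transitivity (\sum_(b : {ffun 'I_n -> bool}) \prod_i
   (phi a i (b i) * (if i == j then (b i : nat)%:R else 1))).
  apply: eq_bigr => b _; rewrite big_split /=; congr (_ * _).
  by rewrite -big_mkcond big_pred1_eq.
rewrite -(bigA_distr_bigA (fun i (c : bool) => phi a i c * (if i == j then (c : nat)%:R else 1))) /= (bigD1 j) //=; congr (_ * _).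
  by rewrite big_bool eqxx /phi andbT andbF /= mulr1 mulr0 addr0.
apply: eq_bigr => i ij; rewrite big_bool (negbTE ij) /phi andbT andbF.
by rewrite !mulr1.
Qed.

Local Notation H := (hadamard R n).
Definition sq := Num.sqrt (2 ^+ n : R).
Lemma sq2 : sq * sq = 2 ^+ n.
Proof. by rewrite -expr2 sqr_sqrtr // exprn_ge0. Qed.
Lemma two_n_neq0 : (2 ^+ n : R) != 0.
Proof. by rewrite expf_neq0 // pnatr_eq0. Qed.

Lemma dotbC (x y : 'I_N) : dotb x y = dotb y x.
Proof. by rewrite /dotb; apply: eq_bigr => i _; rewrite andbC. Qed.

Lemma hadT : H^T = H.
Proof. by apply/matrixP => x y; rewrite !mxE dotbC. Qed.

Lemma HH_entry (x z y : 'I_N) : H x z * H z y =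
  (\prod_i phi (fun i => bit x i != bit y i) i (fb z i)) / 2 ^+ n.
Proof.
rewrite !mxE -sign_prod mulrACA -invfM -expr2 sqr_sqrtr //.
by rewrite exprn_ge0.
Qed.

Lemma HdH (d : 'I_N -> R) (x y : 'I_N) :
  (H *m diagf d *m H) x y = \sum_z H x z * H z y * d z.
Proof.
rewrite mxE; apply: eq_bigr => z _; rewrite mxE (bigD1 z) //= big1 ?addr0.
  by rewrite /diagf mxE eqxx mulrAC.
by move=> w wz; rewrite /diagf mxE (negbTE wz) mulr0.
Qed.

Lemma bits_neq (x y : 'I_N) : x != y -> exists k, bit x k != bit y k.
Proof.
move=> xy; have [k hk|h] := pickP (fun k => bit x k != bit y k); first by exists k.
case/eqP: xy; apply: fb_inj; apply/ffunP => i; rewrite !ffunE.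
by have := h i; move/negbFE/eqP.
Qed.

Lemma prod_one (a : 'I_n -> bool) : (forall i, a i = false) ->
  \prod_i ((-1) ^+ a i + 1) = 2 ^+ n :> R.
Proof.
move=> h; under eq_bigr do rewrite h expr0.
by rewrite prodr_const card_ord.
Qed.

Lemma prod_zero (a : 'I_n -> bool) k (P : pred 'I_n) : a k -> P k ->
  \prod_(i | P i) ((-1) ^+ a i + 1) = 0 :> R.
Proof.
by move=> ak Pk; rewrite (bigD1 k) //= ak expr1 addNr mul0r.
Qed.

Lemma HH : H *m H = 1%:M.
Proof.
apply/matrixP => x y; rewrite mxE.
under eq_bigr do rewrite HH_entry.
rewrite -mulr_suml.
transitivity ((\sum_z (\prod_i phi (fun i => bit x i != bit y i) i (fb z i) * 1)) / 2 ^+ n).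
  by congr (_ / _); apply: eq_bigr => z _; rewrite mulr1.
rewrite (sum_fb (fun b => \prod_i phi (fun i => bit x i != bit y i) i (b i) * 1)).
under eq_bigr do rewrite mulr1.
rewrite S0 mxE.
have [<-|xy] := eqVneq x y.
  by rewrite prod_one ?divff ?two_n_neq0 // => i; rewrite eqxx.
have [k hk] := bits_neq xy.
by rewrite (@prod_zero _ k) ?mul0r.
Qed.

Local Notation X := (weightmx R n).

Lemma W_entry (x y : 'I_N) : (H *m X *m H) x y =
  (\sum_j ((-1) ^+ (bit x j != bit y j) *
     \prod_(i | i != j) ((-1) ^+ (bit x i != bit y i) + 1))) / 2 ^+ n.
Proof.
rewrite HdH -S1.
under eq_bigr do rewrite HH_entry mulrAC.
rewrite -mulr_suml; congr (_ / _).
rewrite -(sum_fb (fun b => \prod_i phi (fun i => bit x i != bit y i) i (b i) *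
   (\sum_j (b j : nat))%:R)).
apply: eq_bigr => z _; congr (_ * _); rewrite /hweight; congr (_%:R).
by apply: eq_bigr => j _; rewrite ffunE.
Qed.

Lemma W_ne (x y : 'I_N) k : bit x k != bit y k ->
  (H *m X *m H) x y = - (hdist x y == 1)%N%:R / 2.
Proof.
move=> ak; rewrite W_entry [\sum_j _](bigD1 k) //= [X in _ + X]big1 ?addr0; last first.
  move=> j jk; apply/eqP; rewrite mulf_eq0; apply/orP; right; apply/eqP.
  by apply: (@prod_zero (fun i => bit x i != bit y i) k) => //; rewrite /= eq_sym.
rewrite ak expr1 mulN1r.
have hd : (hdist x y == 1)%N = [forall (i | i != k), ~~ (bit x i != bit y i)].
  rewrite /hdist (bigD1 k) //= ak add1n eqSS sum_nat_eq0.
  by apply: eq_forallb => i; case: (bit x i != bit y i).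
have p2 : (2 ^+ n : R) = 2 * \prod_(i | i != k) 2.
  have e : \prod_(i < n) (2:R) = 2 ^+ n by rewrite prodr_const card_ord.
  by rewrite -e (bigD1 k).
rewrite hd; case: (boolP [forall (i | i != k), ~~ (bit x i != bit y i)]) => hb.
  have -> : \prod_(i | i != k) ((-1) ^+ (bit x i != bit y i) + 1) = \prod_(i | i != k) (2:R).
    apply: eq_bigr => i ik; have := forallP hb i; rewrite ik /= => /negbTE ->.
    by rewrite expr0.
  have pn0 : \prod_(i | i != k) (2:R) != 0.
    by apply: contraNneq (@two_n_neq0) => h; rewrite p2 h mulr0.
  rewrite p2 mulr1n; field; by rewrite pn0.
move/forallPn: hb => [i]; rewrite negb_imply negbK => /andP [ik ai].
rewrite (@prod_zero (fun i => bit x i != bit y i) i) ?mulr0 ?mul0r ?mulr0n ?oppr0 ?mul0r //.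
Qed.

Lemma DMD (d : 'I_N -> R) (M : 'M[R]_N) x y :
  (diagf d *m M *m diagf d) x y = d x * M x y * d y.
Proof.
rewrite mxE (bigD1 y) //= big1 ?addr0; last first.
  by move=> z zy; rewrite [diagf d z y]mxE (negbTE zy) mulr0.
rewrite [diagf d y y]mxE eqxx; congr (_ * _).
rewrite mxE (bigD1 x) //= big1 ?addr0; last first.
  by move=> z zx; rewrite [diagf d x z]mxE eq_sym (negbTE zx) mul0r.
by rewrite [diagf d x x]mxE eqxx.
Qed.

Variable f : 'I_N -> bool.
Local Notation D := (diagf (gsign R f)).
Local Notation A := (sens_adj R f).

Lemma HQH : H *m (Rmx R f *m X *m Rmx R f - X) *m H = A.
Proof.
have -> : H *m (Rmx R f *m X *m Rmx R f - X) *m H =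
   D *m (H *m X *m H) *m D - H *m X *m H.
  rewrite mulmxBr mulmxBl /Rmx !mulmxA HH mul1mx -!mulmxA HH mulmx1 !mulmxA //.
apply/matrixP => x y; rewrite [in LHS]mxE [Z in _ + Z]mxE DMD [A x y]mxE /gsign.
have [fe|fxy] := boolP (f x == f y).
  rewrite andbF; move/eqP: fe => ->; case: (f y); rewrite /=; ring.
have xy : x != y by apply: contraNneq fxy => ->.
have [k hk] := bits_neq xy.
rewrite (W_ne hk) andbT.
by move: fxy; case: (f x); case: (f y) => //= _; case: (hdist x y == 1)%N; rewrite /=; field.
Qed.

Lemma sensT : A^T = A.
Proof.
apply/matrixP => x y; rewrite !mxE /hdist (eq_sym (f y)).
by congr (if (_ == _)%N && _ then _ else _); apply: eq_bigr => i _; rewrite eq_sym.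
Qed.

Lemma hw_parity (x y : 'I_N) : odd (hweight x + hweight y) = odd (hdist x y).
Proof.
have -> : (hweight x + hweight y = hdist x y + (\sum_i (bit x i && bit y i)).*2)%N.
  rewrite /hweight /hdist -addnn -!big_split /=; apply: eq_bigr => i _.
  by case: (bit x i); case: (bit y i).
by rewrite oddD odd_double addbF.
Qed.

Lemma A_sign (x y : 'I_N) :
  A x y * (-1) ^+ hweight y = - ((-1) ^+ hweight x * A x y).
Proof.
rewrite mxE; case: ifP => [/andP [h1 _]|_]; last by rewrite mul0r mulr0 oppr0.
rewrite mul1r mulr1 -signr_odd -[(-1) ^+ hweight x]signr_odd.
have := hw_parity x y; rewrite (eqP h1) oddD.
by case: (odd (hweight x)); case: (odd (hweight y)); rewrite //= expr1 expr0 ?opprK.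
Qed.

Lemma flip (s : R) (u : 'cV[R]_N) : A *m u = - s *: u ->
  let u' := \col_x ((-1) ^+ hweight x * u x 0) in
  A *m u' = s *: u' /\ nsq u' = nsq u.
Proof.
move=> hu u'; split.
  apply/matrixP => x j; rewrite (ord1 j) [LHS]mxE [RHS]mxE [u' x 0]mxE.
  under eq_bigr => y _ do rewrite [u' y 0]mxE mulrA A_sign mulNr -mulrA.
  rewrite sumrN -mulr_sumr.
  have := congr1 (fun M : 'cV[R]_N => M x 0) hu; rewrite [in X in X -> _]mxE => ->.
  by rewrite mxE; ring.
rewrite /u' !nsqE; apply: eq_bigr => x _; rewrite mxE exprMn -signr_odd.
by case: (odd _); rewrite ?expr1 ?expr0 ?sqrrN expr1n mul1r.
Qed.
End Had.

Lemma eig_s (R : realType) (m : nat) (m_gt0 : (0 < m)%N) (A : 'M[R]_m) :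
  A^T = A ->
  (forall u : 'cV[R]_m, A *m u = - sup (SA A) *: u ->
     exists u' : 'cV[R]_m, A *m u' = sup (SA A) *: u' /\ nsq u' = nsq u) ->
  exists2 u : 'cV[R]_m, vn u = 1 & A *m u = sup (SA A) *: u.
Proof.
move=> sA hf; have [u u1 [h|h]] := eig_exists m_gt0 sA; first by exists u.
have [u' [h1 h2]] := hf u h; exists u' => //.
by apply: nsq1; rewrite h2 vn1.
Qed.

Unset Implicit Arguments.
Set Strict Implicit.

Theorem lemma4p2 (R : realType) (n : nat) (f : 'I_(2 ^ n) -> bool) :
  (exists v : 'cV[R]_(2 ^ n), vnorm v = 1 /\
     qform (Rmx R f *m weightmx R n *m Rmx R f - weightmx R n) v = lambdaf R f) /\
  (forall v : 'cV[R]_(2 ^ n), vnorm v = 1 ->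
     qform (Rmx R f *m weightmx R n *m Rmx R f - weightmx R n) v <= lambdaf R f).
Proof.
set Q := _ - _.
set H := hadamard R n.
set A := sens_adj R f.
have lamE : lambdaf R f = sup (SA A) by [].
have qE v : qform Q v = bil Q v v by [].
have vE v : vnorm v = vn v by [].
have e : H *m Q *m H = A by exact: HQH.
have hQ : Q = H *m A *m H.
  by rewrite -e !mulmxA HH mul1mx -mulmxA HH mulmx1.
have qQ v : bil Q v v = bil A (H *m v) (H *m v).
  by rewrite /bil hQ trmx_mul hadT !mulmxA.
have vnH v : vn (H *m v) = vn v.
  rewrite !vnE; congr (Num.sqrt _).
  by rewrite /nsq /bil trmx_mul hadT !mulmx1 mulmxA -(mulmxA _ H H) HH mulmx1.
rewrite lamE; split; last first.
  move=> v; rewrite vE qE qQ => v1; apply: quad_le_sup; by rewrite vnH.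
have m_gt0 : (0 < 2 ^ n)%N by rewrite expn_gt0.
have [u u1 hu] := eig_s m_gt0 (@sensT R n f) (fun u h => ex_intro _ _ (@flip R n f _ _ h)).
exists (H *m u); rewrite vE vnH; split => //.
rewrite qE qQ !mulmxA HH !mul1mx bilE hu bilZr.
by rewrite -/(nsq u) vn1 // mulr1.
Qed.
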